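(* For $m=1,2$ let $L_m:\mathbb{R}^4\to\mathbb{R}$ be linear functionals such that $\{\xi_1-\xi_2+\xi_3-\xi_4,L_1,L_2\}$ is linearly independent. Then there is $C<\infty$ such that for all nonnegative measurable $g_1,\dots,g_4\in L^2(\mathbb{R})$ and all measurable $E_1,E_2\subset\mathbb{R}$, \[ \int_\Xi\prod_{n=1}^4g_n(\xi_n)\prod_{m=1}^2\chi_{E_m}(L_m(\vec\xi))\,d\lambda(\vec\xi)\le C\prod_{m=1}^2|E_m|^{1/2}\prod_{n=1}^4\|g_n\|_{L^2}. \]
   Context: $\Xi=\{\vec\xi\in\mathbb{R}^4:\xi_1-\xi_2+\xi_3-\xi_4=0\}$ and $\lambda$ is (appropriately normalized) Lebesgue measure on $\Xi$; $\xi_1-\xi_2+\xi_3-\xi_4$ denotes the corresponding linear functional on $\mathbb{R}^4$. $\chi_E$ is the indicator of $E$. *)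

(* Defs.v *)
From HB Require Import structures.
From mathcomp Require Import all_boot all_order all_algebra.
From mathcomp Require Import all_classical all_reals all_analysis.
Set Implicit Arguments. Unset Strict Implicit. Unset Printing Implicit Defensive.
Import Order.TTheory GRing.Theory Num.Theory.
Local Open Scope ring_scope.

Definition lfun4 {R : realType} (L : 'I_4 -> R) (xi : 'I_4 -> R) : R :=
  \sum_(i < 4) L i * xi i.

Definition alt4 {R : realType} : 'I_4 -> R :=
  fun i => if odd (val i) then -1 else 1.

Definition lin_indep3 {R : realType} (f0 f1 f2 : 'I_4 -> R) : Prop :=
  forall c0 c1 c2 : R,
    (forall xi : 'I_4 -> R,
        c0 * lfun4 f0 xi + c1 * lfun4 f1 xi + c2 * lfun4 f2 xi = 0) ->
    [/\ c0 = 0, c1 = 0 & c2 = 0].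

(* The point of Xi = {xi_1 - xi_2 + xi_3 - xi_4 = 0} parametrized by
   (xi_1, xi_2, xi_3); then xi_4 = xi_1 - xi_2 + xi_3. *)
Definition xi_of {R : realType} (p : (R * R) * R) : 'I_4 -> R :=
  fun i => match val i with
           | 0 => p.1.1
           | 1 => p.1.2
           | 2 => p.2
           | _ => p.1.1 - p.1.2 + p.2
           end.

(* Lebesgue measure on Xi (normalized via the parametrization above):
   the product Lebesgue measure on R^3. *)
Definition lambdaXi {R : realType} :=
  ((@lebesgue_measure R \x @lebesgue_measure R) \x @lebesgue_measure R)%E.

(* Main.v *)
Require Import Defs.
From HB Require Import structures.
From mathcomp Require Import all_boot all_order all_algebra.
From mathcomp Require Import all_classical all_reals all_analysis.
From mathcomp Require Import measurable_realfun.
From mathcomp Require Import ring lra.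
From mathcomp Require Import ssrAC.
Import Order.TTheory GRing.Theory Num.Theory.
Set Implicit Arguments. Unset Strict Implicit. Unset Printing Implicit Defensive.
Local Open Scope classical_set_scope.
Local Open Scope ring_scope.

Section Aff.
Context {R : realType}.
Local Notation mu := (@lebesgue_measure R).

Lemma measurable_aff (a b : R) : measurable_fun setT (fun x : R => a * x + b).
Proof. by apply: measurable_funD => //; apply: measurable_funM. Qed.

Definition affm (a b : R) : set (measurableTypeR R) -> \bar R :=
  pushforward mu ((fun x : R => a * x + b) : measurableTypeR R -> measurableTypeR R).

Let affm0 a b : affm a b set0 = 0%E.
Proof. by rewrite /affm /pushforward preimage_set0 measure0. Qed.

Let affm_ge0 a b A : (0 <= affm a b A)%E.
Proof. by rewrite /affm /pushforward; exact: measure_ge0. Qed.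

Let affm_sigma_additive a b : semi_sigma_additive (affm a b).
Proof.
have mf := measurable_aff a b.
move=> F mF tF mUF; rewrite /affm /pushforward preimage_bigcup.
apply: measure_semi_sigma_additive.
- by move=> n; rewrite -[X in measurable X]setTI; exact: (mf measurableT _ (mF n)).
- apply/trivIsetP => /= i j _ _ ij; rewrite -preimage_setI.
  by move/trivIsetP : tF => /(_ _ _ _ _ ij) ->//; rewrite preimage_set0.
- by rewrite -preimage_bigcup -[X in measurable X]setTI; exact: (mf measurableT _ mUF).
Qed.

HB.instance Definition _ a b := isMeasure.Build _ _ _
  (affm a b) (@affm0 a b) (@affm_ge0 a b) (@affm_sigma_additive a b).

Lemma affmE (a b : R) : 0 < a -> forall A, measurable A ->
  affm a b A = ((a^-1)%:E * mu A)%E.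
Proof.
move=> a0 A mA.
rewrite (@lebesgue_measure_unique R (mscale (NngNum (ltW a0)) (affm a b) : {measure set (measurableTypeR R) -> \bar R})) //=.
  by rewrite /mscale /= muleA -EFinM mulVf ?gt_eqF // mul1e.
move=> _ [[c d] _ <-]; rewrite /mscale /= /affm /pushforward.
have -> : (fun x => a * x + b) @^-1` `]c, d]%classic = `](c - b) / a, (d - b) / a]%classic.
  apply/seteqP; split => x /=; rewrite !in_itv /= ltr_pdivrMr // ler_pdivlMr //.
    by move=> /andP[h1 h2]; apply/andP; split; rewrite ?ltrBlDr ?lerBrDr mulrC.
  by move=> /andP[h1 h2]; apply/andP; split; rewrite -?ltrBlDr -?lerBrDr mulrC.
rewrite !lebesgue_measure_itv /= !lte_fin ltr_pM2r ?invr_gt0 // ltrD2r.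
case: ifP => _; last by rewrite mule0.
by rewrite -!EFinB -EFinM; congr EFin; field; rewrite gt_eqF.
Qed.

Lemma reflect_integral (f : R -> \bar R) : measurable_fun setT f ->
  (forall x, (0 <= f x)%E) -> (\int[mu]_x f (- x)%R = \int[mu]_x f x)%E.
Proof.
move=> mf f0.
have := @ge0_integral_pushforward _ _ _ _ _ (-%R : measurableTypeR R -> measurableTypeR R)
  (@oppr_measurable R setT : measurable_fun (setT : set (measurableTypeR R)) (-%R : measurableTypeR R -> measurableTypeR R)) mu setT f measurableT mf
  (fun y _ => f0 y).
rewrite preimage_setT => <-.
by apply: eq_measure_integral => /= A mA _; exact: (lebesgue_measureN mA).
Qed.

Lemma aff_integral_pos (a b : R) (f : R -> \bar R) : 0 < a ->
  measurable_fun setT f -> (forall x, (0 <= f x)%E) ->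
  (\int[mu]_x f (a * x + b)%R = (a^-1)%:E * \int[mu]_x f x)%E.
Proof.
move=> a0 mf f0.
have := @ge0_integral_pushforward _ _ _ _ _
  ((fun x : R => a * x + b) : measurableTypeR R -> measurableTypeR R)
  (measurable_aff a b : measurable_fun (setT : set (measurableTypeR R)) ((fun x : R => a * x + b) : measurableTypeR R -> measurableTypeR R)) mu setT f measurableT mf (fun y _ => f0 y).
rewrite preimage_setT => <-.
have ia : 0 <= a^-1 by rewrite invr_ge0 ltW.
have -> : a^-1 = (NngNum ia)%:num by [].
rewrite -ge0_integral_mscale //.
apply: eq_measure_integral; first exact: (measurable_aff a b).
move=> _ /= A mA _.
by rewrite /mscale /=; exact: (@affmE a b a0 A mA).
Qed.

Lemma aff_integral (a b : R) (f : R -> \bar R) : a != 0 ->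
  measurable_fun setT f -> (forall x, (0 <= f x)%E) ->
  (\int[mu]_x f (a * x + b)%R = (`|a|^-1)%:E * \int[mu]_x f x)%E.
Proof.
move=> a0 mf f0; have [ap|an] := ltP 0 a.
  by rewrite gtr0_norm // aff_integral_pos.
have an' : a < 0 by rewrite lt_neqAle a0 an.
rewrite ltr0_norm //.
have mh : measurable_fun setT (fun y : R => f (- y)).
  exact: (measurableT_comp mf (@oppr_measurable R setT)).
transitivity (\int[mu]_x (fun y => f (- y)%R) ((- a) * x + (- b))%R)%E.
  by apply: eq_integral => x _ /=; congr f; ring.
rewrite (@aff_integral_pos (- a) (- b) (fun y => f (- y)%R)) ?oppr_gt0 //; congr (_ * _)%E.
exact: reflect_integral.
Qed.

End Aff.

Section Lin2.
Context {R : realType}.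
Local Notation mu := (@lebesgue_measure R).
Local Notation RR := (measurableTypeR R).

Lemma eA4 (a b x y : \bar R) : (a * (x * (b * y)) = (a * b) * (x * y))%E.
Proof. by rewrite [(x * _)%E]muleCA [LHS]muleA. Qed.

Lemma mRR_id : measurable_fun (setT : set RR) (fun x : RR => x : R).
Proof. by move=> mD Y mY; rewrite setTI. Qed.

Lemma mRR_aff a b : measurable_fun (setT : set RR) (fun x : RR => a * (x : R) + b).
Proof. exact: measurableT_comp (measurable_aff a b) mRR_id. Qed.

Lemma m2_fst : measurable_fun (setT : set (RR * RR)) (fun q => q.1 : R).
Proof. by move=> mD Y mY; exact: (@measurable_fst _ _ RR RR mD Y mY). Qed.
Lemma m2_snd : measurable_fun (setT : set (RR * RR)) (fun q => q.2 : R).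
Proof. by move=> mD Y mY; exact: (@measurable_snd _ _ RR RR mD Y mY). Qed.

Lemma lin2_core (f g : R -> \bar R) (b1 c1 s1 b2 c2 s2 : R) :
  c1 != 0 -> b1 * c2 - b2 * c1 != 0 ->
  measurable_fun setT f -> measurable_fun setT g ->
  (forall x, 0 <= f x)%E -> (forall x, 0 <= g x)%E ->
  (\int[mu \x mu]_q (f (b1 * q.1 + c1 * q.2 + s1)%R * g (b2 * q.1 + c2 * q.2 + s2)%R)
   = (`|b1 * c2 - b2 * c1|^-1)%:E * (\int[mu]_x f x * \int[mu]_x g x))%E.
Proof.
move=> c10 D0 mf mg f0 g0.
set c := b2 - c2 * b1 / c1.
have DE : b1 * c2 - b2 * c1 = - (c * c1) by rewrite /c; field.
have c0 : c != 0.
  by move: D0; rewrite DE oppr_eq0 mulf_eq0 negb_or => /andP[].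
set K := fun q : RR * RR => (f q.2 * g (c * q.1 + (c2 * (q.2 - s1) / c1 + s2))%R)%E.
have mK : measurable_fun setT K.
  apply: emeasurable_funM; first exact: measurableT_comp mf m2_snd.
  apply: measurableT_comp mg _.
  apply: measurable_funD; first by apply: measurable_funM => //; exact: m2_fst.
  apply: measurable_funD => //; apply: measurable_funM => //.
  apply: measurable_funM => //.
  by apply: measurable_funD => //; exact: m2_snd.
have K0 q : (0 <= K q)%E by rewrite /K mule_ge0.
have mF : measurable_fun setT (fun q : RR * RR =>
   (f (b1 * q.1 + c1 * q.2 + s1)%R * g (b2 * q.1 + c2 * q.2 + s2)%R)%E).
  apply: emeasurable_funM; apply: measurableT_comp => //.
    apply: measurable_funD => //; apply: measurable_funD.
      by apply: measurable_funM => //; exact: m2_fst.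
    by apply: measurable_funM => //; exact: m2_snd.
  apply: measurable_funD => //; apply: measurable_funD.
    by apply: measurable_funM => //; exact: m2_fst.
  by apply: measurable_funM => //; exact: m2_snd.
rewrite (fubini_tonelli1 _ mF); last by move=> q; rewrite mule_ge0.
transitivity (\int[mu]_y ((`|c1|^-1)%:E * \int[mu]_w K (y, w)))%E.
  apply: eq_integral => y _ /=; rewrite /fubini_F /=.
  have mKy : measurable_fun setT (fun w => K (y, w)).
    have -> : (fun w => K (y, w)) =
        (fun w : RR => f w * g ((c2 / c1) * w + (c * y - c2 * s1 / c1 + s2))%R)%E.
      by apply/funext => w; rewrite /K /=; congr (_ * g _)%E; field.
    apply: emeasurable_funM; first exact: measurableT_comp mf mRR_id.
    exact: measurableT_comp mg (mRR_aff _ _).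
  rewrite -(@aff_integral _ c1 (b1 * y + s1) (fun w => K (y, w))) //.
  apply: eq_integral => z _; rewrite /K /=; congr (f _ * g _)%E.
    by ring.
  by rewrite /c; field.
rewrite ge0_integralZl //; last first.
- by move=> y _; apply: integral_ge0 => w _.
- exact: (measurable_fun_fubini_tonelli_F _ mK K0).
rewrite (fubini_tonelli _ mK K0).
transitivity ((`|c1|^-1)%:E * \int[mu]_w (f w * ((`|c|^-1)%:E * \int[mu]_x g x)))%E.
  congr (_ * _)%E; apply: eq_integral => w _ /=; rewrite /K /=.
  rewrite ge0_integralZl //; last first.
    apply: measurableT_comp mg _; exact: measurable_aff.
  by rewrite aff_integral.
rewrite ge0_integralZr //; last by rewrite mule_ge0 // integral_ge0.
rewrite eA4 -EFinM DE normrN normrM invfM mulrC.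
by [].
Qed.

Lemma m2_lin (a b s : R) :
  measurable_fun (setT : set (RR * RR)) (fun q => a * q.1 + b * q.2 + s : R).
Proof.
apply: measurable_funD => //; apply: measurable_funD.
  by apply: measurable_funM => //; exact: m2_fst.
by apply: measurable_funM => //; exact: m2_snd.
Qed.

Lemma lin2 (f g : R -> \bar R) (b1 c1 s1 b2 c2 s2 : R) :
  b1 * c2 - b2 * c1 != 0 ->
  measurable_fun setT f -> measurable_fun setT g ->
  (forall x, 0 <= f x)%E -> (forall x, 0 <= g x)%E ->
  (\int[mu \x mu]_q (f (b1 * q.1 + c1 * q.2 + s1)%R * g (b2 * q.1 + c2 * q.2 + s2)%R)
   = (`|b1 * c2 - b2 * c1|^-1)%:E * (\int[mu]_x f x * \int[mu]_x g x))%E.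
Proof.
move=> D0 mf mg f0 g0.
have [c10|c10] := eqVneq c1 0; last exact: lin2_core.
have c20 : c2 != 0 by move: D0; rewrite c10 mulr0 subr0 mulf_eq0 negb_or => /andP[].
have D0' : b2 * c1 - b1 * c2 != 0 by rewrite -opprB oppr_eq0.
transitivity (\int[mu \x mu]_q (g (b2 * q.1 + c2 * q.2 + s2)%R * f (b1 * q.1 + c1 * q.2 + s1)%R))%E.
  by apply: eq_integral => q _; rewrite muleC.
rewrite lin2_core // [(\int[mu]_x g x * _)%E]muleC; congr (_ * _)%E.
by rewrite -opprB normrN.
Qed.
End Lin2.


Section PMR.
Context (R : realType).
Local Notation RR := (measurableTypeR R).
Local Notation mu := (@lebesgue_measure R).
Definition pmR : set (RR * RR)%type -> \bar R := (mu \x mu)%E.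
HB.instance Definition _ := Measure.copy pmR (mu \x mu)%E.
Let pmR_sigma_finite : sigma_finite setT pmR.
Proof.
have /sigma_finiteP[F [TF ndF Foo]] := sigma_finiteT mu.
exists (fun n => F n `*` F n).
  rewrite -setXTT TF predeqE => -[x y]; split.
    move=> [/= [n _ Fnx] [k _ Gky]]; exists (maxn n k) => //; split.
    - by move: x Fnx; exact/subsetPset/ndF/leq_maxl.
    - by move: y Gky; exact/subsetPset/ndF/leq_maxr.
  by move=> [n _ []/= ? ?]; split; exists n.
move=> k; have [? ?] := Foo k.
split; first exact: measurableX.
by rewrite /pmR product_measure1E// lte_mul_pinfty// ge0_fin_numE.
Qed.
HB.instance Definition _ := Measure_isSigmaFinite.Build _ _ _ pmR pmR_sigma_finite.
End PMR.


Definition lin3 {R : realType} (a b c : R) (p : (R * R) * R) : R :=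
  a * p.1.1 + b * p.1.2 + c * p.2.

Definition det3 {R : realType} (u1 u2 u3 v1 v2 v3 w1 w2 w3 : R) : R :=
  u1 * (v2 * w3 - v3 * w2) - u2 * (v1 * w3 - v3 * w1) + u3 * (v1 * w2 - v2 * w1).

Section Lin3.
Context {R : realType}.
Local Notation mu := (@lebesgue_measure R).
Local Notation RR := (measurableTypeR R).

Lemma m3_2 : measurable_fun (setT : set ((RR * RR) * RR)) (fun p => p.2 : R).
Proof. by move=> mD Y mY; exact: (@measurable_snd _ _ (RR * RR)%type RR mD Y mY). Qed.

Lemma m3_lin (a b c : R) :
  measurable_fun (setT : set ((RR * RR) * RR)) (fun p => lin3 a b c p).
Proof.
have m11 : measurable_fun (setT : set ((RR * RR) * RR)) (fun p => p.1.1 : R).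
  have h := measurableT_comp (@measurable_fst _ _ RR RR) (@measurable_fst _ _ (RR * RR)%type RR).
  move=> mD Y mY; exact: (h mD Y mY).
have m12 : measurable_fun (setT : set ((RR * RR) * RR)) (fun p => p.1.2 : R).
  have h := measurableT_comp (@measurable_snd _ _ RR RR) (@measurable_fst _ _ (RR * RR)%type RR).
  move=> mD Y mY; exact: (h mD Y mY).
have m2 : measurable_fun (setT : set ((RR * RR) * RR)) (fun p => p.2 : R).
  by move=> mD Y mY; exact: (@measurable_snd _ _ (RR * RR)%type RR mD Y mY).
rewrite /lin3; apply: measurable_funD; last exact: measurable_funM.
by apply: measurable_funD; exact: measurable_funM.
Qed.


Lemma lin3_core (f1 f2 f3 : R -> \bar R) (u1 u2 u3 v1 v2 v3 w1 w2 w3 : R) :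
  u3 != 0 -> det3 u1 u2 u3 v1 v2 v3 w1 w2 w3 != 0 ->
  measurable_fun setT f1 -> measurable_fun setT f2 -> measurable_fun setT f3 ->
  (forall x, 0 <= f1 x)%E -> (forall x, 0 <= f2 x)%E -> (forall x, 0 <= f3 x)%E ->
  (\int[lambdaXi]_p (f1 (lin3 u1 u2 u3 p) * f2 (lin3 v1 v2 v3 p) * f3 (lin3 w1 w2 w3 p))
   = (`|det3 u1 u2 u3 v1 v2 v3 w1 w2 w3|^-1)%:E *
     (\int[mu]_x f1 x * (\int[mu]_x f2 x * \int[mu]_x f3 x)))%E.
Proof.
move=> u30 d0 mf1 mf2 mf3 f10 f20 f30.
set b1 := v1 - v3 * u1 / u3; set c1 := v2 - v3 * u2 / u3; set e1 := v3 / u3.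
set b2 := w1 - w3 * u1 / u3; set c2 := w2 - w3 * u2 / u3; set e2 := w3 / u3.
have DE : det3 u1 u2 u3 v1 v2 v3 w1 w2 w3 = u3 * (b1 * c2 - b2 * c1).
  by rewrite /det3 /b1 /c1 /b2 /c2; field.
have D20 : b1 * c2 - b2 * c1 != 0.
  by move: d0; rewrite DE mulf_eq0 negb_or => /andP[].
set H := fun p : (RR * RR) * RR => (f1 p.2 *
  (f2 (b1 * p.1.1 + c1 * p.1.2 + e1 * p.2)%R * f3 (b2 * p.1.1 + c2 * p.1.2 + e2 * p.2)%R))%E.
have mH : measurable_fun setT H.
  apply: emeasurable_funM; first exact: measurableT_comp mf1 m3_2.
  by apply: emeasurable_funM; apply: measurableT_comp (m3_lin _ _ _).
have H0 p : (0 <= H p)%E by rewrite /H !mule_ge0.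
have mF : measurable_fun setT (fun p : (RR * RR) * RR =>
    (f1 (lin3 u1 u2 u3 p) * f2 (lin3 v1 v2 v3 p) * f3 (lin3 w1 w2 w3 p))%E).
  by apply: emeasurable_funM; [apply: emeasurable_funM|];
    apply: measurableT_comp (m3_lin _ _ _).
have F0 p : (0 <= f1 (lin3 u1 u2 u3 p) * f2 (lin3 v1 v2 v3 p) * f3 (lin3 w1 w2 w3 p))%E.
  by rewrite !mule_ge0.
have h := (@fubini_tonelli1 _ _ _ _ _ (@pmR R) mu _ mF F0).
rewrite /lambdaXi; apply: (eq_trans h).

transitivity (\int[@pmR R]_q ((`|u3|^-1)%:E * \int[mu]_t H (q, t)))%E.
  apply: eq_integral => q _; rewrite /fubini_F /=.
  rewrite -(@aff_integral _ u3 (u1 * q.1 + u2 * q.2) (fun t => H (q, t))) //; last first.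
    exact: (measurable_fun_pair2 q mH).
  apply: eq_integral => c _; rewrite /H /lin3 /= -muleA.
  congr (f1 _ * (f2 _ * f3 _))%E.
  - by ring.
  - by rewrite /b1 /c1 /e1; field.
  - by rewrite /b2 /c2 /e2; field.
rewrite ge0_integralZl //; last first.
- by move=> q _; apply: integral_ge0 => t _.
- exact: (measurable_fun_fubini_tonelli_F _ mH H0).
rewrite (@fubini_tonelli _ _ _ _ _ (@pmR R) mu _ mH H0).
transitivity ((`|u3|^-1)%:E * \int[mu]_t (f1 t * ((`|b1 * c2 - b2 * c1|^-1)%:E *
   (\int[mu]_x f2 x * \int[mu]_x f3 x))))%E.
  congr (_ * _)%E; apply: eq_integral => t _; rewrite /H /=.
  rewrite ge0_integralZl //; last 2 first.
  - by apply: emeasurable_funM; apply: measurableT_comp (m2_lin _ _ _).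
  - by move=> q _; rewrite mule_ge0.
  congr (_ * _)%E; exact: lin2.
rewrite ge0_integralZr //; last by rewrite !mule_ge0 // integral_ge0.
by rewrite eA4 -EFinM -invfM -normrM -DE.
Qed.


Lemma lin3_int (f1 f2 f3 : R -> \bar R) (u1 u2 u3 v1 v2 v3 w1 w2 w3 : R) :
  det3 u1 u2 u3 v1 v2 v3 w1 w2 w3 != 0 ->
  measurable_fun setT f1 -> measurable_fun setT f2 -> measurable_fun setT f3 ->
  (forall x, 0 <= f1 x)%E -> (forall x, 0 <= f2 x)%E -> (forall x, 0 <= f3 x)%E ->
  (\int[lambdaXi]_p (f1 (lin3 u1 u2 u3 p) * f2 (lin3 v1 v2 v3 p) * f3 (lin3 w1 w2 w3 p))
   = (`|det3 u1 u2 u3 v1 v2 v3 w1 w2 w3|^-1)%:E *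
     (\int[mu]_x f1 x * (\int[mu]_x f2 x * \int[mu]_x f3 x)))%E.
Proof.
move=> d0 mf1 mf2 mf3 f10 f20 f30.
have [u30|u30] := eqVneq u3 0; last exact: lin3_core.
have [v30|v30] := eqVneq v3 0.
  have w30 : w3 != 0.
    by apply: contra d0 => /eqP w30; rewrite /det3 u30 v30 w30; apply/eqP; ring.
  have dE : det3 w1 w2 w3 v1 v2 v3 u1 u2 u3 = - det3 u1 u2 u3 v1 v2 v3 w1 w2 w3.
    by rewrite /det3; ring.
  have d0' : det3 w1 w2 w3 v1 v2 v3 u1 u2 u3 != 0 by rewrite dE oppr_eq0.
  transitivity (\int[lambdaXi]_p (f3 (lin3 w1 w2 w3 p) * f2 (lin3 v1 v2 v3 p) * f1 (lin3 u1 u2 u3 p)))%E.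
    apply: eq_integral => p _.
    by rewrite muleC [(f1 _ * _)%E]muleC muleA.
  rewrite lin3_core // dE normrN; congr (_ * _)%E.
  by rewrite muleC [(\int[mu]_x f2 x * _)%E]muleC muleA.
have dE : det3 v1 v2 v3 u1 u2 u3 w1 w2 w3 = - det3 u1 u2 u3 v1 v2 v3 w1 w2 w3.
  by rewrite /det3; ring.
have d0' : det3 v1 v2 v3 u1 u2 u3 w1 w2 w3 != 0 by rewrite dE oppr_eq0.
transitivity (\int[lambdaXi]_p (f2 (lin3 v1 v2 v3 p) * f1 (lin3 u1 u2 u3 p) * f3 (lin3 w1 w2 w3 p)))%E.
  by apply: eq_integral => p _; rewrite [(f1 _ * _)%E]muleC.
rewrite lin3_core // dE normrN; congr (_ * _)%E.
by rewrite muleCA.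
Qed.

End Lin3.


Section Key.
Context {R : realType}.
Local Notation mu := (@lebesgue_measure R).
Local Notation RR := (measurableTypeR R).

Lemma LnormE2 d (T : measurableType d) (m : {measure set T -> \bar R}) (f : T -> R) :
  ('N[m]_(2%:E)[EFin \o f] = (\int[m]_x ((f x ^+ 2)%:E)) `^ 2^-1)%E.
Proof.
rewrite Lnorm.unlock /=; congr (_ `^ _)%E; apply: eq_integral => x _.
by rewrite powR_mulrn ?normr_ge0 // real_normK // num_real.
Qed.

Lemma Lnorm_indic (E : set R) : measurable E ->
  ('N[mu]_(2%:E)[EFin \o (\1_E : R -> R)] = (mu E) `^ 2^-1)%E.
Proof.
move=> mE; rewrite LnormE2; congr (_ `^ _)%E.
transitivity (\int[mu]_x ((\1_E x : R)%:E))%E.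
  apply: eq_integral => x _; rewrite indicE.
  by case: (x \in E); rewrite ?expr1n ?expr0n.
by rewrite integral_indic // setIT.
Qed.

Local Notation N h := ('N[mu]_(2%:E)[EFin \o h])%E.

Lemma normG (h1 h2 h3 : R -> R) (a1 a2 a3 b1 b2 b3 c1 c2 c3 : R) :
  det3 a1 a2 a3 b1 b2 b3 c1 c2 c3 != 0 ->
  measurable_fun setT h1 -> measurable_fun setT h2 -> measurable_fun setT h3 ->
  ('N[lambdaXi]_(2%:E)[EFin \o (fun p : (RR * RR) * RR =>
     (h1 (lin3 a1 a2 a3 p) * h2 (lin3 b1 b2 b3 p) * h3 (lin3 c1 c2 c3 p))%R)]
   = (`|det3 a1 a2 a3 b1 b2 b3 c1 c2 c3|^-1 `^ 2^-1)%:E * (N h1 * (N h2 * N h3)))%E.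
Proof.
move=> D0 mh1 mh2 mh3.
have msq (h : R -> R) : measurable_fun setT h ->
    measurable_fun setT (fun x => ((h x ^+ 2)%:E : \bar R)).
  by move=> mh; apply/measurable_EFinP; exact: measurable_funX.
have sq0 (h : R -> R) x : (0 <= ((h x ^+ 2)%:E : \bar R))%E by rewrite lee_fin sqr_ge0.
rewrite !LnormE2.
transitivity ((\int[lambdaXi]_p ((fun x => ((h1 x ^+ 2)%:E : \bar R)) (lin3 a1 a2 a3 p) *
   (fun x => ((h2 x ^+ 2)%:E : \bar R)) (lin3 b1 b2 b3 p) *
   (fun x => ((h3 x ^+ 2)%:E : \bar R)) (lin3 c1 c2 c3 p))) `^ 2^-1)%E.
  by congr (_ `^ _)%E; apply: eq_integral => p _; rewrite /= !exprMn !EFinM.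
rewrite (lin3_int (f1 := fun x => ((h1 x ^+ 2)%:E : \bar R)) (f2 := fun x => ((h2 x ^+ 2)%:E : \bar R)) (f3 := fun x => ((h3 x ^+ 2)%:E : \bar R))) //; try exact: msq.
by rewrite !poweRM ?mule_ge0 ?integral_ge0 ?lee_fin ?invr_ge0 ?normr_ge0 //.
Qed.

Lemma key (h1 h2 h3 k1 k2 k3 : R -> R)
  (a1 a2 a3 b1 b2 b3 c1 c2 c3 d1 d2 d3 e1 e2 e3 f1 f2 f3 : R) :
  det3 a1 a2 a3 b1 b2 b3 c1 c2 c3 != 0 ->
  det3 d1 d2 d3 e1 e2 e3 f1 f2 f3 != 0 ->
  measurable_fun setT h1 -> measurable_fun setT h2 -> measurable_fun setT h3 ->
  measurable_fun setT k1 -> measurable_fun setT k2 -> measurable_fun setT k3 ->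
  (forall x, 0 <= h1 x) -> (forall x, 0 <= h2 x) -> (forall x, 0 <= h3 x) ->
  (forall x, 0 <= k1 x) -> (forall x, 0 <= k2 x) -> (forall x, 0 <= k3 x) ->
  (\int[lambdaXi]_p (((h1 (lin3 a1 a2 a3 p) * h2 (lin3 b1 b2 b3 p) * h3 (lin3 c1 c2 c3 p))
      * (k1 (lin3 d1 d2 d3 p) * k2 (lin3 e1 e2 e3 p) * k3 (lin3 f1 f2 f3 p)))%:E)
   <= ((`|det3 a1 a2 a3 b1 b2 b3 c1 c2 c3|^-1 `^ 2^-1)%:E * (N h1 * (N h2 * N h3))) *
      ((`|det3 d1 d2 d3 e1 e2 e3 f1 f2 f3|^-1 `^ 2^-1)%:E * (N k1 * (N k2 * N k3))))%E.
Proof.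
move=> DA DB mh1 mh2 mh3 mk1 mk2 mk3 h10 h20 h30 k10 k20 k30.
have mG1 : measurable_fun setT (fun p : (RR * RR) * RR =>
     (h1 (lin3 a1 a2 a3 p) * h2 (lin3 b1 b2 b3 p) * h3 (lin3 c1 c2 c3 p))%R).
  by apply: measurable_funM; [apply: measurable_funM|];
    apply: measurableT_comp (m3_lin _ _ _).
have mG2 : measurable_fun setT (fun p : (RR * RR) * RR =>
     (k1 (lin3 d1 d2 d3 p) * k2 (lin3 e1 e2 e3 p) * k3 (lin3 f1 f2 f3 p))%R).
  by apply: measurable_funM; [apply: measurable_funM|];
    apply: measurableT_comp (m3_lin _ _ _).
have H := hoelder lambdaXi mG1 mG2 (ltr0Sn _ 1) (ltr0Sn _ 1) (ltac:(lra) : (2^-1 + 2^-1 = 1 :> R)).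
rewrite (normG DA) // (normG DB) // Lnorm1 in H.
apply: le_trans H; rewrite le_eqVlt; apply/orP; left; apply/eqP.
apply: eq_integral => p _ /=; rewrite ger0_norm //.
by rewrite !mulr_ge0.
Qed.
End Key.

Definition i0 : 'I_4 := @Ordinal 4 0 isT.
Definition i1 : 'I_4 := @Ordinal 4 1 isT.
Definition i2 : 'I_4 := @Ordinal 4 2 isT.
Definition i3 : 'I_4 := @Ordinal 4 3 isT.

Lemma sum4 {R : realType} (F : 'I_4 -> R) : \sum_(i < 4) F i = F i0 + F i1 + F i2 + F i3.
Proof.
rewrite !big_ord_recr big_ord0 /=. rewrite (@add0r R).
by congr (_ + _ + _ + _); congr F; apply: val_inj.
Qed.

Lemma prod4 {R : realType} (F : 'I_4 -> R) : \prod_(i < 4) F i = F i0 * F i1 * F i2 * F i3.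
Proof.
rewrite !big_ord_recr big_ord0 /= (@mul1r R).
by congr (_ * _ * _ * _); congr F; apply: val_inj.
Qed.

Lemma prod4e {R : realType} (F : 'I_4 -> \bar R) :
  (\prod_(i < 4) F i = F i0 * F i1 * F i2 * F i3)%E.
Proof.
rewrite !big_ord_recr big_ord0 /= (@mul1e R).
by congr (_ * _ * _ * _)%E; congr F; apply: val_inj.
Qed.

Section LinE.
Context {R : realType}.
Lemma l100 (p : (R * R) * R) : lin3 1 0 0 p = p.1.1. Proof. by rewrite /lin3; ring. Qed.
Lemma l010 (p : (R * R) * R) : lin3 0 1 0 p = p.1.2. Proof. by rewrite /lin3; ring. Qed.
Lemma l001 (p : (R * R) * R) : lin3 0 0 1 p = p.2. Proof. by rewrite /lin3; ring. Qed.
Lemma l1m11 (p : (R * R) * R) : lin3 1 (-1) 1 p = p.1.1 - p.1.2 + p.2.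
Proof. by rewrite /lin3; ring. Qed.
Lemma lfE (L : 'I_4 -> R) p :
  lfun4 L (xi_of p) = lin3 (L i0 + L i3) (L i1 - L i3) (L i2 + L i3) p.
Proof. by rewrite /lfun4 sum4 /lin3 /xi_of /=; ring. Qed.
End LinE.

Unset Implicit Arguments.
Local Close Scope classical_set_scope.

Theorem lemma4p5 (R : realType) (L1 L2 : 'I_4 -> R) :
  lin_indep3 alt4 L1 L2 ->
  exists C : R,
  forall (g : 'I_4 -> R -> R) (E1 E2 : set R),
    (forall n, measurable_fun setT (g n)) ->
    (forall n x, 0 <= g n x) ->
    (forall n, ('N[@lebesgue_measure R]_(2%:E)[EFin \o g n] < +oo)%E) ->
    measurable E1 -> measurable E2 ->
    (\int[lambdaXi]_p
        ((\prod_(n < 4) g n (xi_of p n))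
         * \1_E1 (lfun4 L1 (xi_of p)) * \1_E2 (lfun4 L2 (xi_of p)))%:E
     <= C%:E
        * (poweR (@lebesgue_measure R E1) 2^-1
           * poweR (@lebesgue_measure R E2) 2^-1)
        * \prod_(n < 4) 'N[@lebesgue_measure R]_(2%:E)[EFin \o g n])%E.
Proof.
move=> hind.
set a1 := L1 i0 + L1 i3; set b1 := L1 i1 - L1 i3; set c1 := L1 i2 + L1 i3.
set a2 := L2 i0 + L2 i3; set b2 := L2 i1 - L2 i3; set c2 := L2 i2 + L2 i3.
have dep (k1 k2 : R) : (k1 != 0) || (k2 != 0) -> k1 * a1 + k2 * a2 = 0 ->
    k1 * b1 + k2 * b2 = 0 -> k1 * c1 + k2 * c2 = 0 -> False.
  move=> nz ha hb hc.
  have H : forall xi : 'I_4 -> R, (k1 * L1 i3 + k2 * L2 i3) * lfun4 alt4 xi +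
      k1 * lfun4 L1 xi + k2 * lfun4 L2 xi = 0.
    move=> xi; rewrite /lfun4 !sum4 /alt4 /=.
    transitivity ((k1 * a1 + k2 * a2) * xi i0 + (k1 * b1 + k2 * b2) * xi i1 +
      (k1 * c1 + k2 * c2) * xi i2).
      by rewrite /a1 /a2 /b1 /b2 /c1 /c2; ring.
    by rewrite ha hb hc; ring.
  case: (hind _ _ _ H) => _ k10 k20.
  by move: nz; rewrite k10 k20 eqxx.
have cases : [\/ b1 * c2 - c1 * b2 != 0, a1 * c2 - c1 * a2 != 0 |
    a1 * b2 - b1 * a2 != 0].
  have [e1|] := eqVneq (b1 * c2 - c1 * b2) 0; last by move=> h; apply: Or31.
  have [e2|] := eqVneq (a1 * c2 - c1 * a2) 0; last by move=> h; apply: Or32.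
  have [e3|] := eqVneq (a1 * b2 - b1 * a2) 0; last by move=> h; apply: Or33.
  exfalso.
  have [a20|a20] := eqVneq a2 0.
    have [b20|b20] := eqVneq b2 0.
      have [c20|c20] := eqVneq c2 0.
        apply: (dep 0 1); rewrite ?oner_eq0 ?orbT // ?a20 ?b20 ?c20; ring.
      apply: (dep c2 (- c1)); rewrite ?c20 //.
      + by rewrite -e2; ring.
      + by rewrite -e1; ring.
      + by ring.
    apply: (dep b2 (- b1)); rewrite ?b20 //.
    + by rewrite -e3; ring.
    + by ring.
    + by rewrite -oppr0 -e1; ring.
  apply: (dep a2 (- a1)); rewrite ?a20 //.
  + by ring.
  + by rewrite -oppr0 -e3; ring.
  + by rewrite -oppr0 -e2; ring.
have lE1 p : lfun4 L1 (xi_of p) = lin3 a1 b1 c1 p by rewrite lfE.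
have lE2 p : lfun4 L2 (xi_of p) = lin3 a2 b2 c2 p by rewrite lfE.
have mI (E : set R) : measurable E -> measurable_fun setT (\1_E : R -> R).
  by move=> mE; exact: measurable_indic.
have I0 (E : set R) x : 0 <= (\1_E x : R) by rewrite indicE.
case: cases => Hd.
- have DA : det3 0 1 0 0 0 1 1 (-1) 1 != 0 :> R.
    by rewrite (_ : det3 _ _ _ _ _ _ _ _ _ = 1) ?oner_eq0 // /det3; ring.
  have DB : det3 1 0 0 a1 b1 c1 a2 b2 c2 != 0.
    by rewrite (_ : det3 _ _ _ _ _ _ _ _ _ = b1 * c2 - c1 * b2) // /det3; ring.
  exists ((`|det3 0 1 0 0 0 1 1 (-1) 1|^-1 `^ 2^-1) *
          (`|det3 1 0 0 a1 b1 c1 a2 b2 c2|^-1 `^ 2^-1)).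
  move=> g E1 E2 mg g0 _ mE1 mE2.
  have K := key DA DB (mg i1) (mg i2) (mg i3) (mg i0) (mI _ mE1) (mI _ mE2)
    (g0 i1) (g0 i2) (g0 i3) (g0 i0) (I0 E1) (I0 E2).
  apply: le_trans (le_trans _ K) _.
    rewrite le_eqVlt; apply/orP; left; apply/eqP.
    apply: eq_integral => p _; congr EFin.
    rewrite prod4 lE1 lE2 l100 l010 l001 l1m11 /xi_of /=; ring.
  rewrite le_eqVlt; apply/orP; left; apply/eqP.
  rewrite !Lnorm_indic // prod4e EFinM.
  by rewrite (AC ((1*(1*(1*1)))*(1*(1*(1*1)))) ((1*5)*(7*8)*(6*2*3*4))).
- have DA : det3 1 0 0 0 0 1 1 (-1) 1 != 0 :> R.
    by rewrite (_ : det3 _ _ _ _ _ _ _ _ _ = 1) ?oner_eq0 // /det3; ring.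
  have DB : det3 0 1 0 a1 b1 c1 a2 b2 c2 != 0.
    by rewrite (_ : det3 _ _ _ _ _ _ _ _ _ = - (a1 * c2 - c1 * a2)) ?oppr_eq0 // /det3; ring.
  exists ((`|det3 1 0 0 0 0 1 1 (-1) 1|^-1 `^ 2^-1) *
          (`|det3 0 1 0 a1 b1 c1 a2 b2 c2|^-1 `^ 2^-1)).
  move=> g E1 E2 mg g0 _ mE1 mE2.
  have K := key DA DB (mg i0) (mg i2) (mg i3) (mg i1) (mI _ mE1) (mI _ mE2)
    (g0 i0) (g0 i2) (g0 i3) (g0 i1) (I0 E1) (I0 E2).
  apply: le_trans (le_trans _ K) _.
    rewrite le_eqVlt; apply/orP; left; apply/eqP.
    apply: eq_integral => p _; congr EFin.
    rewrite prod4 lE1 lE2 l100 l010 l001 l1m11 /xi_of /=; ring.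
  rewrite le_eqVlt; apply/orP; left; apply/eqP.
  rewrite !Lnorm_indic // prod4e EFinM.
  by rewrite (AC ((1*(1*(1*1)))*(1*(1*(1*1)))) ((1*5)*(7*8)*(2*6*3*4))).
- have DA : det3 1 0 0 0 1 0 1 (-1) 1 != 0 :> R.
    by rewrite (_ : det3 _ _ _ _ _ _ _ _ _ = 1) ?oner_eq0 // /det3; ring.
  have DB : det3 0 0 1 a1 b1 c1 a2 b2 c2 != 0.
    by rewrite (_ : det3 _ _ _ _ _ _ _ _ _ = a1 * b2 - b1 * a2) // /det3; ring.
  exists ((`|det3 1 0 0 0 1 0 1 (-1) 1|^-1 `^ 2^-1) *
          (`|det3 0 0 1 a1 b1 c1 a2 b2 c2|^-1 `^ 2^-1)).
  move=> g E1 E2 mg g0 _ mE1 mE2.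
  have K := key DA DB (mg i0) (mg i1) (mg i3) (mg i2) (mI _ mE1) (mI _ mE2)
    (g0 i0) (g0 i1) (g0 i3) (g0 i2) (I0 E1) (I0 E2).
  apply: le_trans (le_trans _ K) _.
    rewrite le_eqVlt; apply/orP; left; apply/eqP.
    apply: eq_integral => p _; congr EFin.
    rewrite prod4 lE1 lE2 l100 l010 l001 l1m11 /xi_of /=; ring.
  rewrite le_eqVlt; apply/orP; left; apply/eqP.
  rewrite !Lnorm_indic // prod4e EFinM.
  by rewrite (AC ((1*(1*(1*1)))*(1*(1*(1*1)))) ((1*5)*(7*8)*(2*3*6*4))).
Qed.
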